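(* Let $\mathbf{X},\mathbf{Y}$ be Banach spaces, $\mathcal{S}\subset\mathbf{X}$, $\mathcal{S}'\subset\mathbf{Y}$. Assume $\Phi:\mathcal{S}\to\mathbf{Y}$ is Lipschitz continuous and $\Phi(\mathcal{S})\supset\mathcal{S}'$. Then $s^\ast_{\mathbf{Y}}(\mathcal{S}')\ge s^\ast_{\mathbf{X}}(\mathcal{S})$.
   Context: For a real Banach space $\mathbf{X}$ and $\mathcal{S}\subset\mathbf{X}$: a codec is a sequence $((E_R,D_R))_{R\in\mathbb{N}}$ of maps $E_R:\mathcal{S}\to\{0,1\}^R$, $D_R:\{0,1\}^R\to\mathbf{X}$; distortion $\delta_{\mathcal{S},\mathbf{X}}(E_R,D_R)=\sup_{\mathbf{x}\in\mathcal{S}}\|\mathbf{x}-D_R(E_R(\mathbf{x}))\|_{\mathbf{X}}$; optimal compression rate $s^\ast_{\mathbf{X}}(\mathcal{S})=\sup\{s\ge0:\exists\text{ codec with }\sup_RR^s\delta_{\mathcal{S},\mathbf{X}}(E_R,D_R)<\infty\}\in[0,\infty]$. *)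

(* Defs.v *)
From HB Require Import structures.
From mathcomp Require Import all_boot all_order all_algebra.
From mathcomp Require Import all_classical all_reals all_analysis.
Set Implicit Arguments. Unset Strict Implicit. Unset Printing Implicit Defensive.
Import Order.TTheory GRing.Theory Num.Theory.
Import numFieldNormedType.Exports.
Local Open Scope classical_set_scope.
Local Open Scope ring_scope.

Definition codec_bits (n : nat) := n.-tuple bool.

(* An codec_encoder for rate n: only its values on S matter. *)
Definition codec_encoder (X : Type) := forall n : nat, X -> codec_bits n.
Definition codec_decoder (X : Type) := forall n : nat, codec_bits n -> X.

Definition codec_distortion (R : realType) (X : normedModType R) (S : set X)
  (n : nat) (E : X -> codec_bits n) (D : codec_bits n -> X) : \bar R :=
  ereal_sup [set ((`| x - D (E x) |)%:E)%E | x in S].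

Definition codec_achieves_rate (R : realType) (X : normedModType R) (S : set X)
  (E : codec_encoder X) (D : codec_decoder X) (s : R) : Prop :=
  (ereal_sup [set ((n%:R `^ s)%:E * codec_distortion S (E n) (D n))%E
              | n in [set n : nat | (0 < n)%N]] < +oo)%E.

(* optimal compression rate s*_X(S) = sup{ s >= 0 | exists codec achieving s }
   taken in [0, +oo] (so it is 0 when no s qualifies). *)
Definition codec_opt_rate (R : realType) (X : normedModType R) (S : set X) : \bar R :=
  ereal_sup ([set 0%E] `|`
    [set (s%:E)%E | s in [set s : R | 0 <= s /\
        exists (E : codec_encoder X) (D : codec_decoder X), codec_achieves_rate S E D s]]).

Definition codec_lipschitz_on (R : realType) (X Y : normedModType R) (S : set X)
  (f : X -> Y) : Prop :=
  exists L : R, forall x y, S x -> S y -> `| f x - f y | <= L * `| x - y |.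

(* Main.v *)
Require Import Defs.
From HB Require Import structures.
From mathcomp Require Import all_boot all_order all_algebra.
From mathcomp Require Import all_classical all_reals all_analysis.
From mathcomp Require Import lra.
Import Order.TTheory GRing.Theory Num.Theory.
Import numFieldNormedType.Exports.
Local Open Scope classical_set_scope.
Local Open Scope ring_scope.

Section Aux.
Variables (R : realType) (X Y : completeNormedModType R).
Variables (S : set X) (S' : set Y) (Phi : X -> Y) (L : R).
Hypothesis L0 : 0 <= L.
Hypothesis HL : forall x y, S x -> S y -> `| Phi x - Phi y | <= L * `| x - y |.
Hypothesis HS : S' `<=` Phi @` S.

Definition pre (S : set X) (Phi : X -> Y) (y : Y) : X := xget 0 [set x | S x /\ Phi x = y].
Definition E' (S : set X) (Phi : X -> Y) (E : codec_encoder X) : codec_encoder Y := fun n y => E n (pre S Phi y).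
Definition D' (S : set X) (E : codec_encoder X) (D : codec_decoder X) : codec_decoder Y :=
  fun n b => Phi (xget (D n b) [set x | S x /\ E n x = b]).

Lemma dist_le E D n :
  (codec_distortion S' (E' S Phi E n) (D' S E D n) <= (2 * L)%:E * codec_distortion S (E n) (D n))%E.
Proof.
apply: ge_ereal_sup => _ [y S'y <-].
have [x0 Sx0 Px0] := HS _ S'y.
have [Sx Px] : S (pre S Phi y) /\ Phi (pre S Phi y) = y.
  by apply: (@xgetPex _ 0 [set x | S x /\ Phi x = y]); exists x0.
set x := pre S Phi y in Sx Px *.
rewrite /E' /D' -/x.
set xb := xget _ _.
have [Sxb Exb] : S xb /\ E n xb = E n x.
  by apply: (@xgetPex _ _ [set z | S z /\ E n z = E n x]); exists x.
set d := codec_distortion S (E n) (D n).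
have ha : ((`| x - D n (E n x) |)%:E <= d)%E.
  by apply: ereal_sup_ubound; exists x.
have hc : ((`| xb - D n (E n x) |)%:E <= d)%E.
  by apply: ereal_sup_ubound; exists xb => //; rewrite Exb.
rewrite -Px.
apply: (@le_trans _ _ ((2 * L)%:E * (Num.max `| x - D n (E n x) | `| xb - D n (E n x) |)%:E)%E).
  rewrite -EFinM lee_fin.
  apply: (le_trans (HL _ _ Sx Sxb)).
  have -> : x - xb = (x - D n (E n x)) - (xb - D n (E n x)) by rewrite opprB addrA subrK.
  apply: (le_trans (ler_wpM2l L0 (ler_normB _ _))).
  set a := `| _ |; set c := `| _ |.
  have : a <= Num.max a c by rewrite le_max lexx.
  have : c <= Num.max a c by rewrite le_max lexx orbT.
  move=> h1 h2.
  have := mulr_ge0 L0 (_ : 0 <= (Num.max a c - a) + (Num.max a c - c)).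
  move=> /(_ ltac:(lra)) h3.
  nra.
apply: lee_wpmul2l; first by rewrite lee_fin mulr_ge0.
by rewrite EFin_max ge_max ha hc.
Qed.

Lemma achieves E D s : codec_achieves_rate S E D s -> codec_achieves_rate S' (E' S Phi E) (D' S E D) s.
Proof.
rewrite /codec_achieves_rate => H.
set M := ereal_sup _ in H.
apply: (@le_lt_trans _ _ ((2 * L)%:E * M)%E); last first.
  by apply: lte_mul_pinfty => //; rewrite lee_fin mulr_ge0.
apply: ge_ereal_sup => _ [n n0 <-].
apply: (@le_trans _ _ ((n%:R `^ s)%:E * ((2 * L)%:E * codec_distortion S (E n) (D n)))%E).
  by apply: lee_wpmul2l; [rewrite lee_fin powR_ge0|apply: dist_le].
rewrite muleCA; apply: lee_wpmul2l; first by rewrite lee_fin mulr_ge0.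
by apply: ereal_sup_ubound; exists n.
Qed.
End Aux.

Theorem lemmaA2 (R : realType) (X Y : completeNormedModType R)
  (S : set X) (S' : set Y) (Phi : X -> Y) :
  codec_lipschitz_on S Phi -> S' `<=` Phi @` S ->
  (codec_opt_rate S <= codec_opt_rate S')%E.
Proof.
move=> [L HL] HS.
have L0 : 0 <= Num.max L 0 by rewrite le_max lexx orbT.
have HL' : forall x y, S x -> S y -> `| Phi x - Phi y | <= Num.max L 0 * `| x - y |.
  move=> x y Sx Sy; apply: (le_trans (HL x y Sx Sy)).
  by apply: ler_wpM2r => //; rewrite le_max lexx.
apply: ereal_sup_le => z [->|]; first by left.
move=> [s [s0 [E [D H]]] <-]; right; exists s => //; split => //.
exists (@E' _ _ _ S Phi E), (@D' _ _ _ Phi S E D).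
exact: (@achieves R X Y S S' Phi _ L0 HL' HS E D s H).
Qed.
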